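(* For integers $n \ge m > 1$, $\det'(K_{n,m}) = n-1$ if $n \neq m$, and $\det'(K_{n,m}) = n$ if $n = m$.
   Context: $K_{n,m}$ is the complete bipartite graph with parts of sizes $n$ and $m$. For a graph $G$ with at most one isolated vertex and no component isomorphic to $K_2$, an edge subset $T$ is an edge determining set if the only automorphism $\phi$ of $G$ satisfying $\{\phi(u),\phi(v)\}=\{u,v\}$ for all $\{u,v\}\in T$ is the identity; the determining index $\det'(G)$ is the minimum size of an edge determining set. *)

(* Defs.v *)
From mathcomp Require Import all_boot all_order all_fingroup.
Set Implicit Arguments. Unset Strict Implicit. Unset Printing Implicit Defensive.

(* A simple graph on a finite vertex type V, given by a symmetric
   irreflexive adjacency relation e. *)

Definition edges (V : finType) (e : rel V) : {set {set V}} :=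
  [set [set x.1; x.2] | x in [set x : V * V | e x.1 x.2]].

Definition is_aut (V : finType) (e : rel V) (phi : {perm V}) : bool :=
  [forall u, forall v, e (phi u) (phi v) == e u v].

Definition edge_determining (V : finType) (e : rel V) (T : {set {set V}}) : bool :=
  (T \subset edges e) &&
  [forall phi : {perm V},
    (is_aut e phi && [forall E in T, phi @: E == E]) ==> (phi == 1%g)].

Definition det_index (V : finType) (e : rel V) : nat :=
  \big[minn/#|edges e|.+1]_(T : {set {set V}} | edge_determining e T) #|T|.

Definition Knm_rel (n m : nat) : rel ('I_n + 'I_m)%type :=
  fun x y => match x, y with
             | inl _, inr _ | inr _, inl _ => true
             | _, _ => false
             end.
Arguments Knm_rel : clear implicits.

(* Main.v *)
Require Import Defs.
From mathcomp Require Import all_boot all_order all_fingroup zify.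
Set Implicit Arguments. Unset Strict Implicit. Unset Printing Implicit Defensive.

Section K.
Variables n m : nat.
Local Notation V := ('I_n + 'I_m)%type.
Local Notation e := (Knm_rel n m).

Definition sd (x : V) : bool := if x is inl _ then true else false.

Lemma eE x y : e x y = (sd x != sd y).
Proof. by case: x; case: y. Qed.

Lemma edgesP E : E \in edges e -> exists a b, E = [set inl a; inr b].
Proof.
case/imsetP => [[x y]]; rewrite inE /= => hxy ->.
case: x hxy => a; case: y => b //= _.
  by exists a, b.
by exists b, a; rewrite setUC.
Qed.

Lemma inl_set2 a b a' : (inl a' \in [set (inl a : V); inr b]) = (a' == a).
Proof. by rewrite !inE orbF. Qed.
Lemma inr_set2 a b b' : (inr b' \in [set (inl a : V); inr b]) = (b' == b).
Proof. by rewrite !inE. Qed.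

Lemma aut_sd phi : is_aut e phi ->
  (forall x, sd (phi x) = sd x) \/ (forall x, sd (phi x) = ~~ sd x).
Proof.
move/forallP=> h.
have h' : forall u v, (sd (phi u) != sd (phi v)) = (sd u != sd v).
  by move=> u v; have /forallP/(_ v)/eqP := h u; rewrite !eE.
case: (boolP [exists x, sd (phi x) == sd x]) => [/existsP[x /eqP hx]|/existsPn hx].
- left=> y; have := h' x y; rewrite hx.
  by case: (sd x); case: (sd (phi y)); case: (sd y).
- right=> y; move: (hx y); by case: (sd (phi y)); case: (sd y).
Qed.

Lemma sd_aut (g : {perm V}) :
  (forall x, sd (g x) = sd x) \/ (forall x, sd (g x) = ~~ sd x) -> is_aut e g.
Proof.
case=> h; apply/forallP=> u; apply/forallP=> v; rewrite !eE !h //.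
by case: (sd u); case: (sd v).
Qed.

Definition cov (T : {set {set V}}) x := [exists E in T, x \in E].

Lemma two_uncov T (hT : edge_determining e T) x y :
  x != y -> sd x = sd y -> ~~ cov T x -> ~~ cov T y -> False.
Proof.
move=> nxy sxy cx cy.
case/andP: hT => _ /forallP/(_ (tperm x y)).
have -> : is_aut e (tperm x y).
  by apply: sd_aut; left=> z; case: tpermP => // ->.
have -> : [forall E in T, tperm x y @: E == E].
  apply/forall_inP => E ET; apply/eqP; rewrite -[RHS]imset_id.
  apply: eq_in_imset => z zE; apply: tpermD.
    by apply/eqP => zx; move/negP: cx; apply; apply/existsP; exists E; rewrite ET zx.
  by apply/eqP => zx; move/negP: cy; apply; apply/existsP; exists E; rewrite ET zx.
move/implyP/(_ isT)/eqP/permP/(_ x); rewrite tpermL perm1 => /eqP.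
by rewrite eq_sym (negbTE nxy).
Qed.

Section T.
Variable T : {set {set V}}.
Hypothesis hT : edge_determining e T.

Lemma Tsub : T \subset edges e. Proof. by case/andP: hT. Qed.

Lemma Tedge E : E \in T -> exists a b, E = [set inl a; inr b].
Proof. by move=> ET; apply: edgesP; apply: (subsetP Tsub). Qed.

Definition CA := [set a : 'I_n | cov T (inl a)].
Definition CB := [set b : 'I_m | cov T (inr b)].
Definition fA a := odflt set0 [pick E in T | inl a \in E].
Definition fB b := odflt set0 [pick E in T | inr b \in E].

Lemma fA_spec a : a \in CA -> fA a \in T /\ inl a \in fA a.
Proof.
rewrite inE /fA => /existsP[E /andP[ET aE]].
case: pickP => [E' /andP[]|/(_ E)] //=; by rewrite ET aE.
Qed.
Lemma fB_spec b : b \in CB -> fB b \in T /\ inr b \in fB b.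
Proof.
rewrite inE /fB => /existsP[E /andP[ET aE]].
case: pickP => [E' /andP[]|/(_ E)] //=; by rewrite ET aE.
Qed.

Lemma inl_uniq E a a' : E \in T -> inl a \in E -> inl a' \in E -> a = a'.
Proof.
by move=> /Tedge[x [y ->]]; rewrite !inl_set2 => /eqP-> /eqP->.
Qed.
Lemma inr_uniq E b b' : E \in T -> inr b \in E -> inr b' \in E -> b = b'.
Proof.
by move=> /Tedge[x [y ->]]; rewrite !inr_set2 => /eqP-> /eqP->.
Qed.

Lemma fA_inj : {in CA &, injective fA}.
Proof.
move=> a a' /fA_spec[ET aE] /fA_spec[_ aE'] eq.
by apply: (inl_uniq ET aE); rewrite eq.
Qed.
Lemma fB_inj : {in CB &, injective fB}.
Proof.
move=> a a' /fB_spec[ET aE] /fB_spec[_ aE'] eq.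
by apply: (inr_uniq ET aE); rewrite eq.
Qed.

Lemma fA_sub : fA @: CA \subset T.
Proof. by apply/subsetP=> E /imsetP[a /fA_spec[]] ? _ ->. Qed.
Lemma fB_sub : fB @: CB \subset T.
Proof. by apply/subsetP=> E /imsetP[a /fB_spec[]] ? _ ->. Qed.

Lemma CA_T : #|CA| <= #|T|.
Proof. by rewrite -(card_in_imset fA_inj); apply: subset_leq_card fA_sub. Qed.
Lemma CB_T : #|CB| <= #|T|.
Proof. by rewrite -(card_in_imset fB_inj); apply: subset_leq_card fB_sub. Qed.

Lemma CA_lb : n.-1 <= #|CA|.
Proof.
have : #|~: CA| <= 1.
  rewrite leqNgt; apply/negP => /card_gt1P[x [y [hx hy nxy]]].
  move: hx hy; rewrite !inE => hx hy.
  by apply: (@two_uncov T hT (inl x) (inl y)).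
have := cardsC CA; rewrite card_ord; lia.
Qed.

Lemma CB_lb : m.-1 <= #|CB|.
Proof.
have : #|~: CB| <= 1.
  rewrite leqNgt; apply/negP => /card_gt1P[x [y [hx hy nxy]]].
  move: hx hy; rewrite !inE => hx hy.
  by apply: (@two_uncov T hT (inr x) (inr y)).
have := cardsC CB; rewrite card_ord; lia.
Qed.

Lemma edge2 E x y : E \in T -> E = [set x; y] -> x != y.
Proof.
move=> /Tedge[a [b ->]] h; apply/eqP => xy; subst y.
have : inl a \in [set x; x] by rewrite -h set21.
have : inr b \in [set x; x] by rewrite -h set22.
by rewrite !inE !orbb => /eqP <-.
Qed.

Lemma small_T : #|T| < n -> #|T| < m -> False.
Proof.
move=> ltn ltm.
have hA : fA @: CA = T.
  apply/eqP; rewrite eqEcard fA_sub card_in_imset; last exact: fA_inj.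
  by rewrite /=; apply: leq_trans CA_lb; by rewrite -ltnS (ltn_predK ltn).
have hB : fB @: CB = T.
  apply/eqP; rewrite eqEcard fB_sub card_in_imset; last exact: fB_inj.
  by rewrite /=; apply: leq_trans CB_lb; by rewrite -ltnS (ltn_predK ltm).
have /card_gt0P[a0 ha0] : 0 < #|~: CA|.
  by have := cardsC CA; rewrite card_ord; have := CA_T; lia.
have /card_gt0P[b0 hb0] : 0 < #|~: CB|.
  by have := cardsC CB; rewrite card_ord; have := CB_T; lia.
rewrite inE in ha0; rewrite inE in hb0.
have uA : forall a, a \notin CA -> a = a0.
  move=> a ha; apply/eqP; apply/negP => /negP na.
  by apply: (@two_uncov T hT (inl a) (inl a0)) => //; move: ha ha0; rewrite !inE.
have uB : forall b, b \notin CB -> b = b0.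
  move=> a ha; apply/eqP; apply/negP => /negP na.
  by apply: (@two_uncov T hT (inr a) (inr b0)) => //; move: ha hb0; rewrite !inE.
have ue : forall E E' x, E \in T -> E' \in T -> x \in E -> x \in E' -> E = E'.
  move=> E E' [a|b] ET E'T xE xE'.
  - suff h : forall F, F \in T -> inl a \in F -> F = fA a.
      by rewrite (h E) // (h E').
    move=> F; rewrite -{1}hA => /imsetP[a1 a1C ->] aF.
    by have [_ /(inl_uniq (fst (fA_spec a1C))) /(_ aF) ->] := fA_spec a1C.
  - suff h : forall F, F \in T -> inr b \in F -> F = fB b.
      by rewrite (h E) // (h E').
    move=> F; rewrite -{1}hB => /imsetP[a1 a1C ->] aF.
    by have [_ /(inr_uniq (fst (fB_spec a1C))) /(_ aF) ->] := fB_spec a1C.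
pose pk x := [pick y | [exists E in T, E == [set x; y]]].
pose g x := if pk x is Some y then y
            else if x == inl a0 then (inr b0 : V) else inl a0.
have gE : forall E x y, E \in T -> E = [set x; y] -> g x = y.
  move=> E x y ET hE; rewrite /g /pk; case: pickP => [z /existsP[E' /andP[E'T /eqP E'eq]] | none].
  - have := ue _ _ x ET E'T; rewrite hE E'eq !set21 => /(_ isT isT) h.
    have : y \in [set x; z] by rewrite -h set22.
    rewrite !inE => /orP[/eqP yx|/eqP //].
    by have := edge2 ET hE; rewrite yx eqxx.
  - by move: (none y) => /existsP; case; exists E; rewrite ET hE eqxx.
have gU : forall x, ~~ cov T x -> g x = if x == inl a0 then inr b0 else inl a0.
  move=> x hx; rewrite /g /pk; case: pickP => // z /existsP[E /andP[ET /eqP hE]].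
  by case/negP: hx; apply/existsP; exists E; rewrite ET hE set21.
have ga0 : g (inl a0) = inr b0.
  by rewrite gU ?eqxx //; move: ha0; rewrite inE.
have gb0 : g (inr b0) = inl a0.
  by rewrite gU //; move: hb0; rewrite inE.
have gP : forall x, g (g x) = x /\ sd (g x) = ~~ sd x.
  move=> x; case: (boolP (cov T x)) => hx.
  - case/existsP: hx => E /andP[ET xE].
    have [a [b hE]] := Tedge ET.
    have g1 : g (inl a) = inr b by apply: gE ET hE.
    have g2 : g (inr b) = inl a by apply: gE ET _; rewrite hE setUC.
    by move: xE; rewrite hE !inE => /orP[/eqP->|/eqP->]; rewrite ?g1 ?g2.
  - case: x hx => [a|b] hx.
    + by rewrite (uA a) ?ga0 ?gb0 // inE.
    + by rewrite (uB b) ?ga0 ?gb0 // inE.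
have gK : cancel g g by move=> x; case: (gP x).
case/andP: hT => _ /forallP/(_ (perm (can_inj gK))).
have -> : is_aut e (perm (can_inj gK)).
  by apply: sd_aut; right=> x; rewrite permE; case: (gP x).
have -> : [forall E in T, perm (can_inj gK) @: E == E].
  apply/forall_inP => E ET; have [a [b hE]] := Tedge ET.
  have g1 : g (inl a) = inr b by apply: gE ET hE.
  have g2 : g (inr b) = inl a by apply: gE ET _; rewrite hE setUC.
  by rewrite hE imsetU1 imset_set1 !permE g1 g2 setUC.
move/implyP/(_ isT)/eqP/permP/(_ (inl a0)); rewrite permE perm1 ga0.
by [].
Qed.

End T.

Lemma ub (T : {set {set V}}) : T \subset edges e ->
 (forall a a', ~~ cov T (inl a) -> ~~ cov T (inl a') -> a = a') ->
 (forall b b', ~~ cov T (inr b) -> ~~ cov T (inr b') -> b = b') ->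
 ((exists a b b', [/\ [set inl a; inr b] \in T, [set inl a; inr b'] \in T & b != b']) \/
  (exists b a a', [/\ [set inl a; inr b] \in T, [set inl a'; inr b] \in T & a != a'])) ->
 edge_determining e T.
Proof.
move=> Tsub hA hB hx; rewrite /edge_determining Tsub /=.
apply/forallP => phi; apply/implyP => /andP[aut /forall_inP fixE].
have mem : forall E x, E \in T -> x \in E -> phi x \in E.
  by move=> E x ET xE; rewrite -(eqP (fixE E ET)); apply: imset_f.
case: (aut_sd aut) => hs.
- have fixc : forall x, cov T x -> phi x = x.
    move=> x /existsP[E /andP[ET xE]].
    have [a [b hE]] := edgesP (subsetP Tsub _ ET).
    move: (mem _ _ ET xE) => pin; move: xE pin (hs x).
    by rewrite hE !inE => /orP[]/eqP -> /orP[]/eqP ->.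
  apply/eqP/permP => x; rewrite perm1.
  case: (boolP (cov T x)) => [/fixc //|hx0].
  case: x hx0 => [a|b] hx0.
  + case hp: (phi (inl a)) => [a'|b']; last by have := hs (inl a); rewrite hp.
    case: (boolP (cov T (inl a'))) => ha'.
      have e1 := fixc _ ha'.
      have : phi (inl a') = phi (inl a) by rewrite e1 hp.
      by move/perm_inj => [->].
    by rewrite (hA a' a ha' hx0).
  + case hp: (phi (inr b)) => [a'|b']; first by have := hs (inr b); rewrite hp.
    case: (boolP (cov T (inr b'))) => ha'.
      have e1 := fixc _ ha'.
      have : phi (inr b') = phi (inr b) by rewrite e1 hp.
      by move/perm_inj => [->].
    by rewrite (hB b' b ha' hx0).
- exfalso; case: hx => [[a [b [b' [h1 h2 nb]]]] | [b [a [a' [h1 h2 na]]]]].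
  + move: (mem _ (inl a) h1 (set21 _ _)) (mem _ (inl a) h2 (set21 _ _)) (hs (inl a)).
    rewrite !inE => /orP[]/eqP -> //= /eqP [eb] _.
    by move: nb; rewrite eb eqxx.
  + move: (mem _ (inr b) h1 (set22 _ _)) (mem _ (inr b) h2 (set22 _ _)) (hs (inr b)).
    rewrite !inE => /orP[]/eqP -> //=; rewrite ?orbF => /eqP [eb] _.
    by move: na; rewrite eb eqxx.
Qed.

Lemma bigmin_le (I : eqType) (r : seq I) (P : pred I) (F : I -> nat) d i0 :
  i0 \in r -> P i0 -> \big[minn/d]_(i <- r | P i) F i <= F i0.
Proof.
elim: r => //= i r IH; rewrite inE big_cons => /orP[/eqP<-|h] hP.
  by rewrite hP geq_minl.
case: (P i); last exact: IH.
by apply: leq_trans (geq_minr _ _) (IH h hP).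
Qed.

Lemma det_eq k T0 : edge_determining e T0 -> #|T0| = k ->
  (forall T, edge_determining e T -> k <= #|T|) -> det_index e = k.
Proof.
move=> h0 c0 hlb; apply/eqP; rewrite eqn_leq; apply/andP; split.
  by rewrite /det_index -c0; apply: bigmin_le => //; rewrite mem_index_enum.
apply: (big_ind (fun x => k <= x)).
- rewrite -c0 ltnW // ltnS; apply: subset_leq_card; by case/andP: h0.
- by move=> x y hx hy; rewrite leq_min hx hy.
- exact: hlb.
Qed.

End K.

Theorem theorem7 (n m : nat) (Hnm : m <= n) (Hm : 1 < m) :
  det_index (Knm_rel n m) = (if n == m then n else n.-1).
Proof.
case: m Hm Hnm => [|[|m]] // _; case: n => [|[|n]] // Hnm.
case: eqP => [[->]|hne].
- pose f (i : 'I_m.+2) : {set ('I_m.+2 + 'I_m.+2)%type} :=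
    [set inl (if i == ord_max then ord0 else i); inr i].
  pose T2 := [set f i | i : 'I_m.+2].
  apply: (@det_eq _ _ _ T2).
  + apply: ub.
    * apply/subsetP => E /imsetP[i _ ->]; apply/imsetP.
      by exists (inl (if i == ord_max then ord0 else i), inr i); rewrite ?inE.
    * suff h : forall a, ~~ cov T2 (inl a) -> a = ord_max.
        by move=> a a' /h -> /h ->.
      move=> a ha; apply/eqP; apply: contraNT ha => na.
      apply/existsP; exists (f a); rewrite imset_f // /f (negbTE na).
      by rewrite set21.
    * move=> b b' hb; exfalso; case/negP: hb.
      by apply/existsP; exists (f b); rewrite imset_f // /f set22.
    * left; exists ord0, ord0, ord_max; split => //.
      - by apply/imsetP; exists ord0 => //; rewrite /f; case: ifP.
      - by apply/imsetP; exists ord_max => //; rewrite /f eqxx.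
  + rewrite card_imset ?card_ord // => i j hij.
    have : inr i \in f j by rewrite -hij /f set22.
    by rewrite /f !inE => /eqP [].
  + move=> T hT; rewrite leqNgt; apply/negP => h.
    exact: (small_T hT h h).
- have ltmn : m < n by move: Hnm hne; rewrite !ltnS leq_eqVlt => /orP[/eqP->|].
  pose f (i : 'I_n.+1) : {set ('I_n.+2 + 'I_m.+2)%type} :=
    [set inl (widen_ord (leqnSn _) i); inr (inord (minn i m))].
  pose T1 := [set f i | i : 'I_n.+1].
  apply: (@det_eq _ _ _ T1).
  + apply: ub.
    * apply/subsetP => E /imsetP[i _ ->]; apply/imsetP.
      by exists (inl (widen_ord (leqnSn _) i), inr (inord (minn i m))); rewrite ?inE.
    * suff h : forall a, ~~ cov T1 (inl a) -> a = ord_max.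
        by move=> a a' /h -> /h ->.
      move=> a ha; apply/val_inj => /=; apply/eqP; apply: contraNT ha => na.
      have lta : a < n.+1 by have := ltn_ord a; rewrite ltnS leq_eqVlt (negbTE na).
      apply/existsP; exists (f (Ordinal lta)); rewrite imset_f // /f.
      have -> : widen_ord (leqnSn n.+1) (Ordinal lta) = a by apply: val_inj.
      by rewrite set21.
    * suff h : forall b, ~~ cov T1 (inr b) -> b = ord_max.
        by move=> a a' /h -> /h ->.
      move=> b hb; apply/val_inj => /=; apply/eqP; apply: contraNT hb => nb.
      have ltb : b <= m by have := ltn_ord b; rewrite ltnS leq_eqVlt (negbTE nb).
      have ltb' : b < n.+1 by lia.
      apply/existsP; exists (f (Ordinal ltb')); rewrite imset_f // /f /=.
      have -> : inord (minn b m) = b by apply: val_inj; rewrite /= inordK; lia.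
      by rewrite set22.
    * right; exists (inord m).
      have hm1 : m < n.+1 by lia.
      have hm2 : m.+1 < n.+1 by lia.
      exists (widen_ord (leqnSn _) (Ordinal hm1)), (widen_ord (leqnSn _) (Ordinal hm2)).
      split => //.
      - apply/imsetP; exists (Ordinal hm1) => //; rewrite /f /=.
        by rewrite minnn.
      - apply/imsetP; exists (Ordinal hm2) => //; rewrite /f /=.
        by rewrite (minn_idPr (leqnSn m)).
      - by apply/eqP => /(congr1 val) /= /eqP; rewrite eqn_leq ltnn andbF.
  + rewrite card_imset ?card_ord // => i j hij.
    have : inl (widen_ord (leqnSn _) i) \in f j by rewrite -hij /f set21.
    by rewrite /f !inE orbF => /eqP [] /val_inj.
  + by move=> T hT; apply: leq_trans (CA_lb hT) (CA_T hT).
Qed.
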